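(* The typical subranks of real $3\times3\times5$ tensors are exactly $2$ and $3$.
   Context: For $r \geq 0$ let $I_r := \sum_{j=1}^r e_j \otimes e_j \otimes e_j$. The subrank of $T \in \mathbb{R}^{n_1} \otimes \mathbb{R}^{n_2} \otimes \mathbb{R}^{n_3}$ is $Q(T) := \max\{ r \mid \exists\ \mathbb{R}\text{-linear } \varphi_i : \mathbb{R}^{n_i} \to \mathbb{R}^r,\ (\varphi_1 \otimes \varphi_2 \otimes \varphi_3) T = I_r\}$. An integer $r$ is a typical subrank of the format $n_1\times n_2\times n_3$ if $\{T \mid Q(T) = r\}$ contains a nonempty Euclidean-open subset of $\mathbb{R}^{n_1} \otimes \mathbb{R}^{n_2} \otimes \mathbb{R}^{n_3}$. *)

(* Defs.v *)
From HB Require Import structures.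
From mathcomp Require Import all_boot all_order all_algebra.
From mathcomp Require Import reals.
Set Implicit Arguments. Unset Strict Implicit. Unset Printing Implicit Defensive.
Import Order.TTheory GRing.Theory Num.Theory.
Local Open Scope ring_scope.

(* A tensor in R^n1 (x) R^n2 (x) R^n3, given by its coordinates in the
   standard basis: T = sum_{i,j,k} T i j k e_i (x) e_j (x) e_k. *)
Definition tensor (R : Type) (n1 n2 n3 : nat) := 'I_n1 -> 'I_n2 -> 'I_n3 -> R.

Definition unit_tensor (R : realType) (r : nat) : tensor R r r r :=
  fun a b c => if (a == b) && (b == c) then 1 else 0.

(* (phi1 (x) phi2 (x) phi3) T, where the linear maps phi_i : R^{n_i} -> R^r
   are given by their r x n_i matrices A, B, C. *)
Definition tensor_map (R : realType) (n1 n2 n3 r : nat)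
  (A : 'M[R]_(r, n1)) (B : 'M[R]_(r, n2)) (C : 'M[R]_(r, n3))
  (T : tensor R n1 n2 n3) : tensor R r r r :=
  fun a b c => \sum_(i < n1) \sum_(j < n2) \sum_(k < n3)
                 A a i * B b j * C c k * T i j k.

Definition subrank_attains (R : realType) (n1 n2 n3 : nat)
  (T : tensor R n1 n2 n3) (r : nat) : Prop :=
  exists (A : 'M[R]_(r, n1)) (B : 'M[R]_(r, n2)) (C : 'M[R]_(r, n3)),
    tensor_map A B C T = @unit_tensor R r.

Definition subrank_is (R : realType) (n1 n2 n3 : nat)
  (T : tensor R n1 n2 n3) (r : nat) : Prop :=
  subrank_attains T r /\ forall s, subrank_attains T s -> (s <= r)%N.

(* {T | Q(T) = r} contains a nonempty Euclidean-open subset; equivalently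
   it contains an open ball (we use the sup-norm ball on coordinates, which
   generates the same (Euclidean) topology). *)
Definition typical_subrank (R : realType) (n1 n2 n3 r : nat) : Prop :=
  exists (T0 : tensor R n1 n2 n3) (eps : R), 0 < eps /\
    forall T : tensor R n1 n2 n3,
      (forall i j k, `|T i j k - T0 i j k| < eps) -> subrank_is T r.

(* Main.v *)
Require Import Defs.
From HB Require Import structures.
From mathcomp Require Import all_boot all_order all_algebra.
From mathcomp Require Import reals.
From mathcomp Require Import ring lra.
From Stdlib Require Import FunctionalExtensionality.
From mathcomp Require Import all_classical topology normedtype sequences.
Set Implicit Arguments. Unset Strict Implicit. Unset Printing Implicit Defensive.
Import Order.TTheory GRing.Theory Num.Theory.
Import numFieldTopology.Exports numFieldNormedType.Exports.
HB.instance Definition _ (R : realType) m n := Uniform_isComplete.Build 'M[R]_(m, n) (@mx_complete R m n).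
Local Open Scope ring_scope.

Section S.
Variable R : realType.

Lemma sum_delta n (i0 : 'I_n) (F : 'I_n -> R) :
  \sum_(i < n) (i == i0)%:R * F i = F i0.
Proof.
rewrite (bigD1 i0) //= eqxx mul1r big1 ?addr0 // => i /negbTE ->.
by rewrite mul0r.
Qed.

Lemma tm_eq n1 n2 n3 r (A : 'M[R]_(r, n1)) (B : 'M[R]_(r, n2)) (C : 'M[R]_(r, n3))
  (T : tensor R n1 n2 n3) a b c :
  tensor_map A B C T a b c =
  \sum_(i < n1) \sum_(j < n2) A a i * B b j * (\sum_(k < n3) C c k * T i j k).
Proof.
rewrite /tensor_map; apply: eq_bigr => i _; apply: eq_bigr => j _.
rewrite mulr_sumr; apply: eq_bigr => k _; by rewrite !mulrA.
Qed.

Definition Mw n1 n2 n3 (T : tensor R n1 n2 n3) (w : 'I_n3 -> R) : 'M[R]_(n1, n2) :=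
  \matrix_(i, j) \sum_(k < n3) w k * T i j k.

Lemma mulABt n1 n2 r (A : 'M[R]_(r, n1)) (B : 'M[R]_(r, n2)) (M : 'M[R]_(n1, n2)) a b :
  (A *m M *m B^T) a b = \sum_(i < n1) \sum_(j < n2) A a i * B b j * M i j.
Proof.
rewrite mxE; under eq_bigr do rewrite mxE.
under eq_bigr do rewrite mulr_suml.
rewrite exchange_big /=; apply: eq_bigr => i _.
apply: eq_bigr => j _; rewrite !mxE; ring.
Qed.

Lemma sum_tm n1 n2 n3 r (A : 'M[R]_(r, n1)) (B : 'M[R]_(r, n2)) (C : 'M[R]_(r, n3))
  (T : tensor R n1 n2 n3) :
  tensor_map A B C T = @unit_tensor R r ->
  A *m Mw T (fun k => \sum_(c < r) C c k) *m B^T = 1%:M.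
Proof.
move=> H; apply/matrixP => a b; rewrite mulABt mxE.
have -> : (a == b)%:R = \sum_(c < r) @unit_tensor R r a b c.
  rewrite /unit_tensor; case: (eqVneq a b) => [<-|ab].
    by rewrite (bigD1 a) //= !eqxx big1 ?addr0 // => c /negbTE; rewrite eq_sym => ->.
  by rewrite big1 // => c _; rewrite (negbTE ab).
rewrite -H; under [RHS]eq_bigr do rewrite tm_eq.
rewrite [RHS]exchange_big /=; apply: eq_bigr => i _.
rewrite [RHS]exchange_big /=; apply: eq_bigr => j _.
rewrite mxE -mulr_sumr; congr (_ * _).
rewrite [RHS]exchange_big /=; apply: eq_bigr => k _; by rewrite mulr_suml.
Qed.

Lemma subrank_le n1 n2 n3 (T : tensor R n1 n2 n3) s :
  subrank_attains T s -> (s <= n1)%N.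
Proof.
case=> A [B [C H]]; have := sum_tm H => E.
have := mxrank1 R s; rewrite -E => <-.
apply: leq_trans (mxrankM_maxl _ _) _.
apply: leq_trans (mxrankM_maxl _ _) _.
exact: rank_leq_col.
Qed.


Lemma dd_unit n (M : 'M[R]_n) e : n%:R * e < 1 ->
  (forall i j, `|M i j - (i == j)%:R| <= e) -> M \in unitmx.
Proof.
move=> ne H; rewrite unitmxE unitfE; apply/negP => /det0P [v v0 vM].
case: n M ne H v v0 vM => [|n] M ne H v v0 vM.
  by move/negP: v0; apply; apply/eqP/matrixP => i [].
case: (@arg_maxP _ _ _ ord0 xpredT (fun j => `|v 0 j|) isT) => j _ Hj.
have e0 : 0 <= e by apply: le_trans (H ord0 ord0); exact: normr_ge0.
have E : v 0 j = - \sum_i v 0 i * (M i j - (i == j)%:R).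
  have : (v *m M) 0 j = 0 by rewrite vM mxE.
  rewrite mxE => S.
  have : \sum_i v 0 i * M i j = \sum_i v 0 i * (M i j - (i == j)%:R) + v 0 j.
    rewrite -[v 0 j in RHS](sum_delta j (fun i => v 0 i)) -big_split /=.
    by apply: eq_bigr => i _; ring.
  rewrite S => /eqP; rewrite eq_sym addrC addr_eq0 => /eqP ->.
  by [].
have B : `|v 0 j| <= n.+1%:R * e * `|v 0 j|.
  rewrite {1}E normrN; apply: le_trans (ler_norm_sum _ _ _) _.
  have -> : n.+1%:R * e * `|v 0 j| = \sum_(i < n.+1) e * `|v 0 j|.
    by rewrite sumr_const card_ord -mulr_natl; ring.
  apply: ler_sum => i _; rewrite normrM mulrC; apply: ler_pM => //.
  exact: Hj.
have vj0 : `|v 0 j| = 0.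
  apply/eqP; rewrite eq_le normr_ge0 andbT.
  have : (1 - n.+1%:R * e) * `|v 0 j| <= 0 by rewrite mulrBl mul1r subr_le0.
  rewrite pmulr_rle0 //; by rewrite subr_gt0.
move/negP: v0; apply; apply/eqP/matrixP => a i; rewrite (ord1 a) mxE.
apply/normr0_eq0/eqP; rewrite eq_le normr_ge0 andbT -vj0; exact: Hj.
Qed.


Definition wa (a : 'I_2) : 'I_3 := widen_ord (isT : (2 <= 3)%N) a.
Definition o30 : 'I_3 := @Ordinal 3 0 isT.
Definition o31 : 'I_3 := @Ordinal 3 1 isT.
Definition o32 : 'I_3 := @Ordinal 3 2 isT.
Definition jb (b : 'I_2) : 'I_3 := if (b == 0 :> nat) then o30 else o32.
Definition pi_ (p : 'I_4) : 'I_3 := if (p < 2)%N then o30 else o31.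
Definition pj_ (p : 'I_4) : 'I_3 := if odd p then o32 else o30.
Definition pab (a b : 'I_2) : 'I_4 :=
  if (a == 0 :> nat) then (if (b == 0 :> nat) then @Ordinal 4 0 isT else @Ordinal 4 1 isT)
  else (if (b == 0 :> nat) then @Ordinal 4 2 isT else @Ordinal 4 3 isT).
Definition w45 (k : 'I_4) : 'I_5 := widen_ord (isT : (4 <= 5)%N) k.

Definition Nmat (T : tensor R 3 3 5) : 'M[R]_4 :=
  \matrix_(p, k) T (pi_ p) (pj_ p) (w45 k).

Lemma attains2 (T : tensor R 3 3 5) : (Nmat T)^T \in unitmx -> subrank_attains T 2.
Proof.
move=> U.
pose A2 : 'M[R]_(2,3) := \matrix_(a, i) (i == wa a)%:R.
pose B2 : 'M[R]_(2,3) := \matrix_(b, j) (j == jb b)%:R.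
pose Tgt : 'M[R]_(2,4) := \matrix_(c, p) ((p : nat) == 3 * c)%N%:R.
pose Y := Tgt *m invmx ((Nmat T)^T).
pose C2 : 'M[R]_(2,5) := \matrix_(c, k) if (k < 4)%N then Y c (inord k) else 0.
exists A2, B2, C2; apply: functional_extensionality_dep => a.
apply: functional_extensionality_dep => b.
apply: functional_extensionality_dep => c.
rewrite tm_eq.
under eq_bigr => i _ do under eq_bigr => j _ do rewrite mxE -mulrA.
under eq_bigr => i _ do rewrite -mulr_sumr.
rewrite sum_delta.
under eq_bigr => j _ do rewrite mxE.
rewrite sum_delta.
have YN : Y *m (Nmat T)^T = Tgt by rewrite /Y -mulmxA mulVmx // mulmx1.
have -> : \sum_(k < 5) C2 c k * T (wa a) (jb b) k =
          \sum_(k < 4) Y c k * (Nmat T)^T k (pab a b).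
  rewrite big_ord_recr /= mxE ltnn mul0r addr0; apply: eq_bigr => k _.
  rewrite !mxE /= ltn_ord inord_val; congr (_ * _).
  by congr (T _ _ _); case: a => [[|[|]]] // ?; case: b => [[|[|]]] // ?; apply: val_inj.
have := congr1 (fun M : 'M[R]_(2,4) => M c (pab a b)) YN; rewrite mxE => E.
rewrite E mxE; clear E YN.
rewrite /unit_tensor.
by case: a => [[|[|]]] //; case: b => [[|[|]]] //; case: c => [[|[|]]].
Qed.


Definition Zt : tensor R 3 3 5 := fun i j k =>
  ((k < 4)%N && (i == pi_ (inord k)) && (j == pj_ (inord k)))%:R.

Lemma Nmat_Zt (T0 : tensor R 3 3 5) d :
  (Nmat (fun i j k => T0 i j k + d * Zt i j k))^T = (Nmat T0)^T + d%:M.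
Proof.
apply/matrixP => k p; rewrite !mxE /Zt /= ltn_ord inord_val; congr (_ + _).
rewrite eq_sym; case: (eqVneq p k) => [->|pk]; first by rewrite !eqxx mulr1.
rewrite mulr0n /=; suff -> : (pi_ k == pi_ p) && (pj_ p == pj_ k) = false by rewrite mulr0.
move: pk; by case: p => [[|[|[|[|]]]] ?] //; case: k => [[|[|[|[|]]]] ?].
Qed.

Lemma dense2 (T0 : tensor R 3 3 5) eps : 0 < eps ->
  exists T : tensor R 3 3 5, (forall i j k, `|T i j k - T0 i j k| < eps) /\
    subrank_attains T 2.
Proof.
move=> ep.
pose N0 := (Nmat T0)^T.
pose P := char_poly (- N0).
pose dl (m : nat) := eps / (m.+2)%:R.
have dlpos m : 0 < dl m by rewrite divr_gt0.
have dllt m : dl m < eps.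
  rewrite /dl ltr_pdivrMr // ltr_pMr //; by rewrite ltr1n.
suff /existsP [m Hm] : [exists m : 'I_5, (Nmat (fun i j k => T0 i j k + dl m * Zt i j k))^T \in unitmx].
  exists (fun i j k => T0 i j k + dl m * Zt i j k); split; last exact: attains2.
  move=> i j k; rewrite addrC addKr normrM gtr0_norm //.
  apply: le_lt_trans (dllt m); rewrite ler_piMr ?(ltW (dlpos m)) //.
  by rewrite /Zt; case: (_ && _ && _); rewrite ?normr1 ?normr0.
case: (boolP [exists m : 'I_5, (Nmat (fun i j k => T0 i j k + dl m * Zt i j k))^T \in unitmx]) => // /existsPn H.
have rt m : (m < 5)%N -> root P (dl m).
  move=> mlt; have := H (Ordinal mlt); rewrite Nmat_Zt -/N0 unitmxE unitfE negbK.
  move=> /det0P [v v0 vM]; rewrite /P -eigenvalue_root_char; apply/eigenvalueP.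
  exists v => //; move: vM; rewrite mulmxDr mul_mx_scalar mulmxN.
  by move/eqP; rewrite addr_eq0 => /eqP ->; rewrite opprK.
have := @max_poly_roots _ P [seq dl m | m <- iota 0 5].
rewrite size_map size_iota /P size_char_poly ltnn; apply.
- by rewrite monic_neq0 // char_poly_monic.
- by apply/allP => x /mapP [m]; rewrite mem_iota add0n => /andP [_ /rt] ? ->.
rewrite map_inj_uniq ?iota_uniq // => m n; rewrite /dl => /(mulfI (lt0r_neq0 ep)).
by move/invr_inj/eqP; rewrite eqr_nat eqSS eqSS => /eqP.
Qed.


Definition T2 : tensor R 3 3 5 := fun i j k =>
  let i := (i : nat) in let j := (j : nat) in let k := (k : nat) in
  if k == 0%N then ((i == 0%N) && (j == 0%N))%:R - ((i == 1%N) && (j == 1%N))%:R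
  else if k == 1%N then (((i == 0%N) && (j == 2%N)) || ((i == 2%N) && (j == 0%N)))%:R
  else if k == 2%N then (((i == 0%N) && (j == 1%N)) || ((i == 1%N) && (j == 0%N)))%:R
  else if k == 3%N then (((i == 1%N) && (j == 2%N)) || ((i == 2%N) && (j == 1%N)))%:R
  else (((i == 0%N) && (j == 0%N)) || ((i == 1%N) && (j == 1%N)))%:R
       - 2 * ((i == 2%N) && (j == 2%N))%:R.

Lemma T2_N (k p : 'I_4) : T2 (pi_ p) (pj_ p) (w45 k) = (k == p)%:R.
Proof.
by case: p => [[|[|[|[|]]]] ?] //; case: k => [[|[|[|[|]]]] ?] //=;
  rewrite /T2 /= ?subr0 ?mulr0 ?subrr.
Qed.

Lemma near2_attains (T : tensor R 3 3 5) :
  (forall i j k, `|T i j k - T2 i j k| < 1/20) -> subrank_attains T 2.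
Proof.
move=> H; apply: attains2; apply: (@dd_unit _ _ (1/20)); first by lra.
move=> k p; rewrite !mxE -T2_N; exact: ltW.
Qed.



Lemma sum5 (F : 'I_5 -> R) : \sum_k F k =
  F (@Ordinal 5 0 isT) + F (@Ordinal 5 1 isT) + F (@Ordinal 5 2 isT)
  + F (@Ordinal 5 3 isT) + F (@Ordinal 5 4 isT).
Proof.
rewrite !big_ord_recr big_ord0 /= add0r.
by congr (_ + _ + _ + _ + _); congr F; apply: val_inj.
Qed.

Lemma sum3 (F : 'I_3 -> R) : \sum_k F k = F o30 + F o31 + F o32.
Proof.
rewrite !big_ord_recr big_ord0 /= add0r.
by congr (_ + _ + _); congr F; apply: val_inj.
Qed.

Lemma sq5 (a b c d e : R) : (a + b + c + d + e) ^+ 2 <= 5 * (a^+2 + b^+2 + c^+2 + d^+2 + e^+2).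
Proof.
have h1 := sqr_ge0 (a - b). have h2 := sqr_ge0 (a - c). have h3 := sqr_ge0 (a - d).
have h4 := sqr_ge0 (a - e). have h5 := sqr_ge0 (b - c). have h6 := sqr_ge0 (b - d).
have h7 := sqr_ge0 (b - e). have h8 := sqr_ge0 (c - d). have h9 := sqr_ge0 (c - e).
have h10 := sqr_ge0 (d - e).
nra.
Qed.

Lemma sq_small (x t : R) : `|t| < 1/20 -> (x * t) ^+ 2 <= x ^+ 2 / 400.
Proof.
move=> /ltW; rewrite ler_norml => /andP [h1 h2].
have h3 := sqr_ge0 x.
have : t ^+ 2 <= 1/400 by nra.
move=> h; rewrite exprMn; nra.
Qed.

Lemma core2 (T : tensor R 3 3 5) (x : 'I_5 -> R) (u v : 'I_3 -> R) :
  (forall i j k, `|T i j k - T2 i j k| < 1/20) ->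
  (forall i j, \sum_k x k * T i j k = u i * v j) -> forall k, x k = 0.
Proof.
move=> HT HM.
pose S := \sum_k x k ^+ 2.
pose D i j := \sum_k x k * (T i j k - T2 i j k).
have HD i j : D i j ^+ 2 <= 5 / 400 * S.
  rewrite /D /S sum5.
  apply: le_trans (sq5 _ _ _ _ _) _.
  rewrite sum5 !mulrDr; rewrite -!mulrA -!mulrDr ler_pM2l //.
  have := sq_small (x (@Ordinal 5 0 isT)) (HT i j (@Ordinal 5 0 isT)).
  have := sq_small (x (@Ordinal 5 1 isT)) (HT i j (@Ordinal 5 1 isT)).
  have := sq_small (x (@Ordinal 5 2 isT)) (HT i j (@Ordinal 5 2 isT)).
  have := sq_small (x (@Ordinal 5 3 isT)) (HT i j (@Ordinal 5 3 isT)).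
  have := sq_small (x (@Ordinal 5 4 isT)) (HT i j (@Ordinal 5 4 isT)).
  lra.
have HM' i j : u i * v j = \sum_k x k * T2 i j k + D i j.
  by rewrite -HM /D -big_split /=; apply: eq_bigr => k _; ring.
have hS : S = \sum_k x k ^+ 2 by [].
rewrite sum5 in hS.
have Ex i j := HM' i j.
have L : (u o30 * v o30 + u o31 * v o31 + u o32 * v o32) ^+ 2
   + (u o30 * v o31 - u o31 * v o30) ^+ 2 + (u o30 * v o32 - u o32 * v o30) ^+ 2
   + (u o31 * v o32 - u o32 * v o31) ^+ 2 =
   (u o30 * v o30) ^+ 2 + (u o30 * v o31) ^+ 2 + (u o30 * v o32) ^+ 2
   + (u o31 * v o30) ^+ 2 + (u o31 * v o31) ^+ 2 + (u o31 * v o32) ^+ 2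
   + (u o32 * v o30) ^+ 2 + (u o32 * v o31) ^+ 2 + (u o32 * v o32) ^+ 2 by ring.
rewrite !Ex !sum5 /T2 /= in L.
have H00 := HD o30 o30. have H01 := HD o30 o31. have H02 := HD o30 o32.
have H10 := HD o31 o30. have H11 := HD o31 o31. have H12 := HD o31 o32.
have H20 := HD o32 o30. have H21 := HD o32 o31. have H22 := HD o32 o32.
move: L H00 H01 H02 H10 H11 H12 H20 H21 H22 hS.
set y0 := x (@Ordinal 5 0 isT). set y1 := x (@Ordinal 5 1 isT).
set y2 := x (@Ordinal 5 2 isT). set y3 := x (@Ordinal 5 3 isT).
set y4 := x (@Ordinal 5 4 isT).
set a00 := D o30 o30. set a01 := D o30 o31. set a02 := D o30 o32.
set a10 := D o31 o30. set a11 := D o31 o31. set a12 := D o31 o32.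
set a20 := D o32 o30. set a21 := D o32 o31. set a22 := D o32 o32.
move=> L H00 H01 H02 H10 H11 H12 H20 H21 H22 hS.
have g1 := sqr_ge0 (a00 - a11). have g2 := sqr_ge0 (a00 - a22).
have g3 := sqr_ge0 (a11 - a22). have g4 := sqr_ge0 (a01 + a10).
have g5 := sqr_ge0 (a02 + a20). have g6 := sqr_ge0 (a12 + a21).
have k00 := sqr_ge0 (y0 + y4 + 2 * a00). have k11 := sqr_ge0 (- y0 + y4 + 2 * a11).
have k22 := sqr_ge0 (-2 * y4 + 2 * a22).
have k01 := sqr_ge0 (y2 + 2 * a01). have k10 := sqr_ge0 (y2 + 2 * a10).
have k02 := sqr_ge0 (y1 + 2 * a02). have k20 := sqr_ge0 (y1 + 2 * a20).
have k12 := sqr_ge0 (y3 + 2 * a12). have k21 := sqr_ge0 (y3 + 2 * a21).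
have k4 := sqr_ge0 y4.
have S0 : S <= 0 by lra.
move=> k; have : x k ^+ 2 <= S.
  rewrite /S (bigD1 k) //= lerDl; apply: sumr_ge0 => i _; exact: sqr_ge0.
move=> /le_trans /(_ S0) h; apply/eqP; rewrite -sqrf_eq0 eq_le h sqr_ge0.
by [].
Qed.

Lemma mul_delta00 n (X Y : 'M[R]_n.+1) i j : (X *m delta_mx 0 0 *m Y) i j = X i 0 * Y 0 j.
Proof.
rewrite mxE (bigD1 0) //= big1 ?addr0.
  rewrite mxE (bigD1 0) //= big1 ?addr0; first by rewrite mxE !eqxx mulr1.
  by move=> m /negbTE m0; rewrite mxE m0 mulr0.
move=> l /negbTE l0; rewrite mxE big1 ?mul0r // => m _.
by rewrite mxE l0 andbF mulr0.
Qed.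

Lemma near2_not3 (T : tensor R 3 3 5) :
  (forall i j k, `|T i j k - T2 i j k| < 1/20) -> ~ subrank_attains T 3.
Proof.
move=> HT [A [B [C H]]].
have S := sum_tm H.
have dS := congr1 (fun M : 'M[R]_3 => \det M) S; rewrite /= !det_mulmx det1 in dS.
have Au : A \in unitmx.
  rewrite unitmxE unitfE; apply/eqP => d0; move: dS; rewrite d0 !mul0r => /eqP.
  by rewrite eq_sym oner_eq0.
have Bu : B^T \in unitmx.
  rewrite unitmxE unitfE; apply/eqP => d0; move: dS; rewrite d0 !mulr0 => /eqP.
  by rewrite eq_sym oner_eq0.
pose M := Mw T (fun k => C 0 k).
have HM : A *m M *m B^T = delta_mx 0 0.
  apply/matrixP => a b; rewrite mulABt mxE.
  transitivity (tensor_map A B C T a b 0).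
    by rewrite tm_eq; apply: eq_bigr => i _; apply: eq_bigr => j _; rewrite mxE.
  rewrite H /unit_tensor; case: (eqVneq a b) => [->|ab] /=; first by case: (b == 0).
  case: (eqVneq b 0) => [b0|]; last by rewrite andbF.
  by move: ab; rewrite b0 => /negbTE ->.
have HM2 : M = invmx A *m delta_mx 0 0 *m invmx B^T.
  by rewrite -HM !mulmxA mulVmx // mul1mx -mulmxA mulmxV // mulmx1.
have X0 := @core2 T (fun k => C 0 k) (fun i => invmx A i 0) (fun j => invmx B^T 0 j) HT.
have : forall k, C 0 k = 0.
  apply: X0 => i j; have := congr1 (fun N : 'M[R]_3 => N i j) HM2.
  by rewrite /= mul_delta00 mxE.
move=> C0; have := congr1 (fun f => f 0 0 0) H; rewrite /= tm_eq /unit_tensor /=.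
rewrite big1 => [/eqP|i _]; first by rewrite eq_sym oner_eq0.
rewrite big1 // => j _; rewrite big1 ?mulr0 // => k _; by rewrite C0 mul0r.
Qed.

Lemma typical2 : typical_subrank R 3 3 5 2.
Proof.
exists T2, (1/20); split; first by lra.
move=> T HT; split; first exact: near2_attains.
move=> s Hs; have := subrank_le Hs; rewrite leq_eqVlt => /orP [/eqP s3|].
  by exfalso; apply: (near2_not3 HT); move: Hs; rewrite s3.
by rewrite ltnS.
Qed.


Lemma fixpt n (G : 'rV[R]_n -> 'rV[R]_n) (z0 : 'rV[R]_n) (r q : R) :
  0 < r -> 0 <= q -> q < 1 ->
  (forall z, `|z0 - z| <= r -> `|z0 - G z| <= r) ->
  (forall z z', `|z0 - z| <= r -> `|z0 - z'| <= r -> `|G z - G z'| <= q * `|z - z'|) ->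
  exists z, `|z0 - z| <= r /\ G z = z.
Proof.
move=> r0 q0 q1 HU HL.
pose U := closed_ball z0 r.
have UE : U = (fun z : 'rV[R]_n => `|z0 - z| <= r) by rewrite /U closed_ballE.
have GU : {homo G : z / U z >-> U z} by rewrite UE; exact: HU.
pose f := mkfun_fun GU.
have cf : is_contraction f.
  exists (interval_inference.NngNum q0); split => //= -[z z'] [/= Uz Uz'].
  by apply: HL; move: Uz Uz'; rewrite UE.
have [|p Up pf] := @banach_fixed_point R 'rV[R]_n U f cf (@closed_ball_closed _ _ z0 r).
  by exists z0; rewrite UE /= subrr normr0 ltW.
by exists p; move: Up; rewrite UE => Up; split.
Qed.

Lemma rv_norm_le n (v : 'rV[R]_n) c : 0 <= c -> (`|v| <= c) = [forall i, `|v 0 i| <= c].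
Proof.
move=> c0; have -> : `|v| = mx_norm v by []. rewrite mx_normrE.
apply/idP/idP.
  move=> /bigmax_leP [_ H]; apply/forallP => i; exact: (H (0, i)).
move=> /forallP H; apply/bigmax_leP; split => // -[a i] _; by rewrite (ord1 a).
Qed.


Definition T3 : tensor R 3 3 5 := fun i j k =>
  let i := (i : nat) in let j := (j : nat) in let k := (k : nat) in
  if (k < 3)%N then ((i == k) && (j == k))%:R
  else if k == 3%N then (j == (i + 1) %% 3)%N%:R
  else (i == (j + 1) %% 3)%N%:R.

Definition zx (z : 'rV[R]_9) : 'I_5 -> R := fun k => z 0 (widen_ord (isT : (5 <= 9)%N) k).
Definition zc (z : 'rV[R]_9) (m : nat) : R := z 0 (inord m).
Definition dd (T : tensor R 3 3 5) (z : 'rV[R]_9) i j : R :=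
  \sum_k zx z k * (T i j k - T3 i j k).

Lemma tri3 (a b c a' b' c' : R) :
  `|(a - b + c) - (a' - b' + c')| <= `|a - a'| + `|b - b'| + `|c - c'|.
Proof.
have -> : (a - b + c) - (a' - b' + c') = (a - a') - (b - b') + (c - c') by ring.
apply: le_trans (ler_normD _ _) _; rewrite lerD2r.
by apply: le_trans (ler_normB _ _) _.
Qed.

Lemma prod_lip (p q p' q' r N : R) : `|p| <= r -> `|q'| <= r ->
  `|p - p'| <= N -> `|q - q'| <= N -> `|p * q - p' * q'| <= 2 * r * N.
Proof.
move=> hp hq' h1 h2.
have -> : p * q - p' * q' = p * (q - q') + q' * (p - p') by ring.
apply: le_trans (ler_normD _ _) _; rewrite !normrM.
have r0 : 0 <= r by apply: le_trans hp.
have N0 : 0 <= N by apply: le_trans h1.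
have := ler_pM (normr_ge0 _) (normr_ge0 _) hp h2.
have := ler_pM (normr_ge0 _) (normr_ge0 _) hq' h1.
lra.
Qed.

Lemma dd_lip (T : tensor R 3 3 5) (z z' : 'rV[R]_9) (N : R) i j :
  (forall i j k, `|T i j k - T3 i j k| < 1/1000) ->
  (forall m, `|z 0 m - z' 0 m| <= N) -> `|dd T z i j - dd T z' i j| <= 5/1000 * N.
Proof.
move=> HT Hz; rewrite /dd -sumrB.
apply: le_trans (ler_norm_sum _ _ _) _.
have -> : 5/1000 * N = \sum_(k < 5) (N * (1/1000)) by rewrite sumr_const card_ord -mulr_natl; ring.
apply: ler_sum => k _; rewrite -mulrBl normrM; apply: ler_pM => //.
  exact: Hz.
exact: ltW.
Qed.

Lemma dd_bnd (T : tensor R 3 3 5) (z : 'rV[R]_9) i j :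
  (forall i j k, `|T i j k - T3 i j k| < 1/1000) ->
  (forall m, `|z 0 m| <= 2) -> `|dd T z i j| <= 1/100.
Proof.
move=> HT Hz; rewrite /dd.
apply: le_trans (ler_norm_sum _ _ _) _.
have -> : 1/100 = \sum_(k < 5) (2 * (1/1000)) :> R by rewrite sumr_const card_ord -mulr_natl; lra.
apply: ler_sum => k _; rewrite normrM; apply: ler_pM => //.
  exact: Hz.
exact: ltW.
Qed.



Definition Gs (T : tensor R 3 3 5) (z : 'rV[R]_9) : seq R :=
  let d := dd T z in
  let a1 := zc z 5 in let a2 := zc z 6 in let b1 := zc z 7 in let b2 := zc z 8 in
  [:: 1 - d o30 o30; a1 * b1 - d o31 o31; a2 * b2 - d o32 o32;
      a1 * b2 - d o31 o32; a2 * b1 - d o32 o31;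
      a2 * b1 - d o32 o31 + d o31 o30; a1 * b2 - d o31 o32 + d o32 o30;
      a1 * b2 - d o31 o32 + d o30 o31; a2 * b1 - d o32 o31 + d o30 o32].

Definition Gm T (z : 'rV[R]_9) : 'rV[R]_9 := \row_(m < 9) nth 0 (Gs T z) m.
Definition z0 : 'rV[R]_9 := \row_(m < 9) ((m : nat) == 0%N)%:R.

Lemma LU1 (d : R) : `|d| <= 1/100 -> `|1 - (1 - d)| <= 1/10.
Proof. rewrite !ler_norml => /andP [h1 h2]; apply/andP; split; lra. Qed.

Lemma LU2 (p q d : R) : `|p| <= 1/10 -> `|q| <= 1/10 -> `|d| <= 1/100 ->
  `|0 - (p * q - d)| <= 1/10.
Proof.
rewrite !ler_norml => /andP [h1 h2] /andP [h3 h4] /andP [h5 h6].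
apply/andP; split; nra.
Qed.

Lemma LU3 (p q d d' : R) : `|p| <= 1/10 -> `|q| <= 1/10 -> `|d| <= 1/100 ->
  `|d'| <= 1/100 -> `|0 - (p * q - d + d')| <= 1/10.
Proof.
rewrite !ler_norml => /andP [h1 h2] /andP [h3 h4] /andP [h5 h6] /andP [h7 h8].
apply/andP; split; nra.
Qed.

Lemma zc_bnd (z : 'rV[R]_9) m : (m < 9)%N -> `|z0 - z| <= 1/10 -> (m != 0)%N ->
  `|zc z m| <= 1/10.
Proof.
move=> mlt; rewrite rv_norm_le; last by lra.
move=> /forallP /(_ (inord m)); rewrite /zc !mxE inordK // => H m0.
by move: H; rewrite (negbTE m0) sub0r normrN.
Qed.

Lemma z_bnd2 (z : 'rV[R]_9) : `|z0 - z| <= 1/10 -> forall m, `|z 0 m| <= 2.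
Proof.
rewrite rv_norm_le; last by lra.
move=> /forallP H m; have := H m; rewrite !mxE.
set e : R := ((m : nat) == 0%N)%:R.
have h1 : `|e| <= 1 by rewrite /e; case: (_ == _); rewrite ?normr1 ?normr0.
move=> h2.
have : `|z 0 m| <= `|e| + `|e + - z 0 m|.
  have := ler_normB e (e + - z 0 m).
  by have -> : e - (e + - z 0 m) = z 0 m by ring.
lra.
Qed.

Lemma GU (T : tensor R 3 3 5) : (forall i j k, `|T i j k - T3 i j k| < 1/1000) ->
  forall z, `|z0 - z| <= 1/10 -> `|z0 - Gm T z| <= 1/10.
Proof.
move=> HT z Hz.
have db i j : `|dd T z i j| <= 1/100 := dd_bnd i j HT (z_bnd2 Hz).
have a1 := @zc_bnd z 5 isT Hz isT. have a2 := @zc_bnd z 6 isT Hz isT.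
have b1 := @zc_bnd z 7 isT Hz isT. have b2 := @zc_bnd z 8 isT Hz isT.
rewrite rv_norm_le; last by lra.
apply/forallP => m; rewrite !mxE.
case: m => [[|[|[|[|[|[|[|[|[|//]]]]]]]]] Hm] /=.
all: first [apply: LU1 | apply: LU3 | apply: LU2]; by [|exact: db].
Qed.

Lemma LL1 (d d' N : R) : 0 <= N -> `|d - d'| <= 5/1000 * N ->
  `|1 - d - (1 - d')| <= 1/2 * N.
Proof.
move=> N0 h; have -> : 1 - d - (1 - d') = - (d - d') by ring.
rewrite normrN; lra.
Qed.

Lemma LL2 (p q p' q' d d' N : R) : 0 <= N -> `|p| <= 1/10 -> `|q'| <= 1/10 ->
  `|p - p'| <= N -> `|q - q'| <= N -> `|d - d'| <= 5/1000 * N ->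
  `|p * q - d - (p' * q' - d')| <= 1/2 * N.
Proof.
move=> N0 hp hq h1 h2 h3; have := prod_lip hp hq h1 h2.
have -> : p * q - d - (p' * q' - d') = (p * q - p' * q') - (d - d') by ring.
move=> h4; have := ler_normB (p * q - p' * q') (d - d'); lra.
Qed.

Lemma LL3 (p q p' q' d d' e e' N : R) : 0 <= N -> `|p| <= 1/10 -> `|q'| <= 1/10 ->
  `|p - p'| <= N -> `|q - q'| <= N -> `|d - d'| <= 5/1000 * N ->
  `|e - e'| <= 5/1000 * N ->
  `|p * q - d + e - (p' * q' - d' + e')| <= 1/2 * N.
Proof.
move=> N0 hp hq h1 h2 h3 h5; have := prod_lip hp hq h1 h2.
move=> h4; have := tri3 (p * q) d e (p' * q') d' e'; lra.
Qed.

Lemma GL (T : tensor R 3 3 5) : (forall i j k, `|T i j k - T3 i j k| < 1/1000) ->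
  forall z z', `|z0 - z| <= 1/10 -> `|z0 - z'| <= 1/10 ->
  `|Gm T z - Gm T z'| <= 1/2 * `|z - z'|.
Proof.
move=> HT z z' Hz Hz'.
set N := `|z - z'|.
have N0 : 0 <= N by exact: normr_ge0.
have HN m : `|z 0 m - z' 0 m| <= N.
  have : `|z - z'| <= N by [].
  by rewrite rv_norm_le // => /forallP /(_ m); rewrite !mxE.
have hd m : `|zc z m - zc z' m| <= N by exact: HN.
have dl i j : `|dd T z i j - dd T z' i j| <= 5/1000 * N := dd_lip i j HT HN.
have a1 := @zc_bnd z 5 isT Hz isT. have a2 := @zc_bnd z 6 isT Hz isT.
have b1 := @zc_bnd z 7 isT Hz isT. have b2 := @zc_bnd z 8 isT Hz isT.
have a1' := @zc_bnd z' 5 isT Hz' isT. have a2' := @zc_bnd z' 6 isT Hz' isT.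
have b1' := @zc_bnd z' 7 isT Hz' isT. have b2' := @zc_bnd z' 8 isT Hz' isT.
rewrite rv_norm_le; last by apply: mulr_ge0 => //; lra.
apply/forallP => m; rewrite !mxE.
case: m => [[|[|[|[|[|[|[|[|[|//]]]]]]]]] Hm] /=.
all: first [apply: LL1 | apply: LL3 | apply: LL2]; by [|exact: hd|exact: dl].
Qed.

Lemma ord3P (P : 'I_3 -> Prop) : P o30 -> P o31 -> P o32 -> forall i, P i.
Proof.
move=> h0 h1 h2 [[|[|[|//]]] Hi].
- by have -> : Ordinal Hi = o30 by apply: val_inj.
- by have -> : Ordinal Hi = o31 by apply: val_inj.
- by have -> : Ordinal Hi = o32 by apply: val_inj.
Qed.

Lemma zxE (z : 'rV[R]_9) k : zx z k = zc z k.
Proof. by rewrite /zx /zc; congr (z 0 _); apply: val_inj; rewrite /= inordK // (ltn_trans (ltn_ord k)). Qed.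

Lemma core3 (T : tensor R 3 3 5) : (forall i j k, `|T i j k - T3 i j k| < 1/1000) ->
  exists (x : 'I_5 -> R) (u v : 'I_3 -> R),
   (forall i j, \sum_k x k * T i j k = u i * v j) /\
   u o30 = 1 /\ v o30 = 1 /\ `|u o31| <= 1/10 /\ `|u o32| <= 1/10 /\
   `|v o31| <= 1/10 /\ `|v o32| <= 1/10.
Proof.
move=> HT.
have [|||||z [Hz Gz]] := @fixpt 9 (Gm T) z0 (1/10) (1/2).
- by lra.
- by lra.
- by lra.
- exact: GU.
- exact: GL.
have E m : (m < 9)%N -> zc z m = nth 0 (Gs T z) m.
  move=> mlt; have := congr1 (fun w : 'rV[R]_9 => w 0 (inord m)) Gz.
  by rewrite /= mxE inordK // => <-.
have e0 := E 0%N isT. have e1 := E 1%N isT. have e2 := E 2%N isT.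
have e3 := E 3%N isT. have e4 := E 4%N isT. have e5 := E 5%N isT.
have e6 := E 6%N isT. have e7 := E 7%N isT. have e8 := E 8%N isT.
rewrite /= in e0 e1 e2 e3 e4 e5 e6 e7 e8.
exists (zx z), (fun i => nth 0 [:: 1; zc z 5; zc z 6] i),
  (fun i => nth 0 [:: 1; zc z 7; zc z 8] i).
split; last first.
  by rewrite /= !(zc_bnd _ Hz).
have sp i j : \sum_k zx z k * T i j k = \sum_k zx z k * T3 i j k + dd T z i j.
  by rewrite /dd -big_split; apply: eq_bigr => k _ /=; ring.
apply: ord3P; apply: ord3P; rewrite sp sum5 !zxE /T3 /=; lra.
Qed.

Definition O5 (m : nat) (H : (m < 5)%N) : 'I_5 := Ordinal H.
Definition sg (i : 'I_3) : 'I_3 :=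
  if (i == 0%N :> nat) then o31 else if (i == 1%N :> nat) then o32 else o30.
Definition sg' (i : 'I_3) : 'I_3 :=
  if (i == 0%N :> nat) then o32 else if (i == 1%N :> nat) then o30 else o31.
Definition tu (k : 'I_5) : 'I_5 :=
  if (k == 0%N :> nat) then @O5 1 isT else if (k == 1%N :> nat) then @O5 2 isT
  else if (k == 2%N :> nat) then @O5 0 isT else k.
Definition tu' (k : 'I_5) : 'I_5 :=
  if (k == 0%N :> nat) then @O5 2 isT else if (k == 1%N :> nat) then @O5 0 isT
  else if (k == 2%N :> nat) then @O5 1 isT else k.

Lemma sgK : cancel sg' sg.
Proof. by move=> [[|[|[|//]]] Hi]; apply: val_inj. Qed.
Lemma sgK' : cancel sg sg'.
Proof. by move=> [[|[|[|//]]] Hi]; apply: val_inj. Qed.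
Lemma tuK : cancel tu tu'.
Proof. by move=> [[|[|[|[|[|//]]]]] Hi]; apply: val_inj. Qed.

Lemma T3_sym i j k : T3 (sg i) (sg j) (tu k) = T3 i j k.
Proof.
by case: i => [[|[|[|//]]] Hi]; case: j => [[|[|[|//]]] Hj];
  case: k => [[|[|[|[|[|//]]]]] Hk].
Qed.

Definition good (T : tensor R 3 3 5) c (x : 'I_5 -> R) (u v : 'I_3 -> R) :=
  (forall i j, \sum_k x k * T i j k = u i * v j) /\ u c = 1 /\ v c = 1 /\
  forall i, i != c -> `|u i| <= 1/10 /\ `|v i| <= 1/10.

Lemma good_transfer (T : tensor R 3 3 5) c x u v :
  good (fun i j k => T (sg i) (sg j) (tu k)) c x u v ->
  good T (sg c) (fun k => x (tu' k)) (fun i => u (sg' i)) (fun i => v (sg' i)).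
Proof.
move=> [H [u1 [v1 Hb]]]; split; last split; last split.
- move=> i j; rewrite (reindex_inj (can_inj tuK)) /=.
  have := H (sg' i) (sg' j); rewrite !sgK => <-.
  by apply: eq_bigr => k _; rewrite tuK.
- by rewrite sgK'.
- by rewrite sgK'.
move=> i ic; apply: Hb; apply: contra ic => /eqP <-; by rewrite sgK.
Qed.

Lemma good0 (T : tensor R 3 3 5) : (forall i j k, `|T i j k - T3 i j k| < 1/1000) ->
  exists x u v, good T o30 x u v.
Proof.
move=> /core3 [x [u [v [H [u0 [v0 [h1 [h2 [h3 h4]]]]]]]]].
exists x, u, v; split => //; split => //; split => //.
by apply: ord3P => //; split.
Qed.

Lemma typical3 : typical_subrank R 3 3 5 3.
Proof.
exists T3, (1/1000); split; first by lra.
move=> T HT; split; last by move=> s Hs; exact: subrank_le Hs.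
pose T1 := fun i j k => T (sg i) (sg j) (tu k).
pose T2 := fun i j k => T1 (sg i) (sg j) (tu k).
have HT1 i j k : `|T1 i j k - T3 i j k| < 1/1000 by rewrite -T3_sym; exact: HT.
have HT2 i j k : `|T2 i j k - T3 i j k| < 1/1000 by rewrite -T3_sym; exact: HT1.
have [x0 [u0 [v0 G0]]] := good0 HT.
have [x1 [u1 [v1 /good_transfer G1]]] := good0 HT1.
have [x2 [u2 [v2 /good_transfer/good_transfer G2]]] := good0 HT2.
pose xx c := if c == o30 then x0 else if c == o31 then (fun k => x1 (tu' k))
  else (fun k => x2 (tu' (tu' k))).
pose uu c := if c == o30 then u0 else if c == o31 then (fun i => u1 (sg' i))
  else (fun i => u2 (sg' (sg' i))).
pose vv c := if c == o30 then v0 else if c == o31 then (fun i => v1 (sg' i))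
  else (fun i => v2 (sg' (sg' i))).
have G : forall c, good T c (xx c) (uu c) (vv c).
  by apply: ord3P; rewrite /xx /uu /vv /=.
pose U : 'M[R]_3 := \matrix_(i, c) uu c i.
pose V : 'M[R]_3 := \matrix_(i, c) vv c i.
have dU (W : 'M[R]_3) (w : 'I_3 -> 'I_3 -> R) : W = \matrix_(i, c) w c i ->
   (forall c, w c c = 1 /\ forall i, i != c -> `|w c i| <= 1/10) -> W \in unitmx.
  move=> -> Hw; apply: (dd_unit (e := 1/10)); first by lra.
  move=> i c; rewrite mxE; case: (eqVneq i c) => [->|ic].
    by have [-> _] := Hw c; rewrite subrr normr0; lra.
  by rewrite subr0; have [_ h] := Hw c; exact: h.
have Uu : U \in unitmx.
  apply: (dU U (fun c i => uu c i)) => // c; have [_ [h1 [_ h2]]] := G c.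
  by split => // i /h2 [].
have Vu : V \in unitmx.
  apply: (dU V (fun c i => vv c i)) => // c; have [_ [_ [h1 h2]]] := G c.
  by split => // i /h2 [].
exists (invmx U), (invmx V), (\matrix_(c, k) xx c k).
apply: functional_extensionality_dep => a.
apply: functional_extensionality_dep => b.
apply: functional_extensionality_dep => c.
rewrite tm_eq.
have E i j : \sum_k (\matrix_(c, k) xx c k) c k * T i j k = U i c * V j c.
  by rewrite !mxE; have [H _] := G c; rewrite -H; apply: eq_bigr => k _; rewrite mxE.
under eq_bigr do under eq_bigr do rewrite E.
have -> : \sum_i \sum_j invmx U a i * invmx V b j * (U i c * V j c) =
   (invmx U *m U) a c * (invmx V *m V) b c.
  rewrite !mxE mulr_suml; apply: eq_bigr => i _; rewrite mulr_sumr.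
  by apply: eq_bigr => j _; ring.
rewrite !mulVmx // !mxE /unit_tensor.
case: (eqVneq a c) => [eac|ac].
  rewrite eac mul1r; case: (eqVneq b c) => [ebc|bc] /=; first by [].
  by [].
rewrite mul0r; case: (eqVneq a b) => [ab|]; last by [].
by move: ac; rewrite ab => /negbTE ->.
Qed.

End S.

Unset Implicit Arguments.
Local Close Scope ring_scope.

Theorem theorem4p10 (R : realType) (r : nat) :
  typical_subrank R 3 3 5 r <-> r = 2%N \/ r = 3%N.
Proof.
split.
- move=> [T0 [eps [ep H]]].
  have [T [HT A2]] := dense2 T0 ep.
  have [_ Hr] := H T HT.
  have r2 := Hr 2%N A2.
  have [Ar _] := H T0 (fun i j k => ltac:(by rewrite subrr normr0)).
  have r3 := subrank_le Ar.
  case: r r2 r3 {H Hr Ar} => [|[|[|[|r]]]] //= _ _; by [left|right].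
- by case => ->; [exact: typical2 | exact: typical3].
Qed.
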